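(* Let $D$ be a knot diagram and $B$ an over-bridge or under-bridge of $D$, and let $D^\circ_B$ be the knotoid diagram obtained by removing the interior of $B$ from $D$. Then $g(D)\ge g(D^\circ_B)$.
   Context: A knot diagram is a generic immersion of an oriented circle in $\mathbb{R}^2$ whose only singularities are finitely many transverse double points (crossings), each with over/under information. The genus $g(D)$ of a knot diagram is the genus of the canonical Seifert surface from Seifert's algorithm: smooth each crossing in the orientation-respecting way to get disjoint embedded circles (Seifert circles), fill them with disjoint disks, and attach a half-twisted band at each crossing; equivalently $g(D)=(n-s_D+1)/2$ with $n$ the number of crossings and $s_D$ the number of Seifert circles. An over-bridge (resp. under-bridge) of length $k\ge1$ of $D$ is a sub-arc $B$ of $D$, with endpoints not at crossings, whose interior passes through exactly $k$ crossings, passing over (resp. under) at each. A knotoid diagram is a generic immersion $f:[0,1]\to\mathbb{R}^2$ with only transverse double points, each with over/under data. Its canonical surface: draw it in $\mathbb{R}^2\times\{0\}\subset\mathbb{R}^3$, orient it, smooth every crossing in the orientation-respecting way, obtaining disjoint embedded Seifert circles and one embedded interval $J$ (the Seifert interval) with the same endpoints as the diagram; fill the Seifert circles with disjoint disks lying above $\mathbb{R}^2\times\{0\}$, take a band $J\times[0,1]$ lying below $\mathbb{R}^2\times\{0\}$ meeting it in $J\times\{0\}$, and attach a half-twisted band at each crossing. The genus of a knotoid diagram is the genus of this surface (which has one boundary component). *)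

(* Defs.v *)
From HB Require Import structures.
From mathcomp Require Import all_boot all_order all_algebra.
Set Implicit Arguments. Unset Strict Implicit. Unset Printing Implicit Defensive.
Import Order.TTheory GRing.Theory Num.Theory.

(* A passage of the curve through a crossing: ((label, over?), sign).
   [gover] = true iff the curve passes OVER at this passage;
   [gsign] = true iff the crossing is positive (same on both passages). *)
Definition gentry := (nat * bool * bool)%type.
Definition glabel (x : gentry) : nat := x.1.1.
Definition gover (x : gentry) : bool := x.1.2.
Definition gsign (x : gentry) : bool := x.2.
Definition gdef : gentry := (0, false, false).

(* Signed Gauss code: the passages through crossings in order along the
   oriented curve (cyclically for a knot diagram, linearly from the tail to
   the head for a knotoid diagram). *)
Definition gauss_code := seq gentry.

Definition wf_gauss (w : gauss_code) : bool :=
  all (fun x =>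
    [&& count (fun y => (glabel y == glabel x) && gover y) w == 1,
        count (fun y => (glabel y == glabel x) && ~~ gover y) w == 1 &
        all (fun y => (glabel y == glabel x) ==> (gsign y == gsign x)) w]) w.

Definition ncross (w : gauss_code) : nat := size (undup (map glabel w)).

Definition gpartner (w : gauss_code) (i : nat) : nat :=
  find (fun j => (j != i) && (glabel (nth gdef w j) == glabel (nth gdef w i)))
       (iota 0 (size w)).

Definition ncycles (m : nat) (f : nat -> nat) : nat :=
  fcard (fun i : 'I_m => insubd i (f i)) 'I_m.

(* Planarity of a signed Gauss code of a closed curve: the 4-valent graph
   (vertices = crossings, edges = arcs) with the rotation system determined
   by the crossing signs has  #faces = #vertices + 2  (Euler's formula on
   the sphere).  Half-edge (p, b) is encoded as 2p + b; b = true: outgoing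
   half-edge at passage p, b = false: incoming one.  At passage p with
   partner q, the counterclockwise rotation is
     in_p, in_q, out_p, out_q   if q crosses p from right to left,
     in_p, out_q, out_p, in_q   otherwise,
   and q crosses p from right to left iff (sign == over at p). *)
Definition face_step (w : gauss_code) (h : nat) : nat :=
  let m := size w in
  let p := h./2 in
  let b := odd h in
  let p1 := if b then p.+1 %% m else (p + m).-1 %% m in
  let b1 := ~~ b in
  let q := gpartner w p1 in
  let rl := gsign (nth gdef w p1) == gover (nth gdef w p1) in
  q.*2 + (if rl then b1 else ~~ b1).

Definition planar_gauss (w : gauss_code) : bool :=
  (size w == 0) || (ncycles (size w).*2 (face_step w) == ncross w + 2).

Definition knot_diagram (w : gauss_code) : bool := wf_gauss w && planar_gauss w.

(* Seifert circles of a knot diagram: arc i runs from passage i to passage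
   i+1 (mod m); the oriented smoothing at passage i+1 continues along the
   outgoing arc of the partner passage. *)
Definition seifert_circles_knot (w : gauss_code) : nat :=
  let m := size w in
  if m == 0 then 1 else ncycles m (fun i => gpartner w (i.+1 %% m)).

Definition knot_genus (w : gauss_code) : rat :=
  ((ncross w)%:R - (seifert_circles_knot w)%:R + 1) / 2%:R.

(* Seifert circles of a knotoid diagram: arcs 0..m, arc j runs from passage
   j-1 (tail if j = 0) to passage j (head if j = m).  The oriented smoothing
   sends arc j (j < m) to arc (partner j)+1; we close the Seifert interval
   (arc m -> arc 0) so it becomes one extra cycle, which is subtracted. *)
Definition seifert_circles_knotoid (v : gauss_code) : nat :=
  let m := size v in
  ncycles m.+1 (fun j => if j < m then (gpartner v j).+1 else 0) - 1.

(* Canonical surface: s disks + one band + n half-twisted bands, so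
   chi = s + 1 - n, one boundary component, genus = (1 - chi - 1)/2
   = (n - s)/2. *)
Definition knotoid_genus (v : gauss_code) : rat :=
  ((ncross v)%:R - (seifert_circles_knotoid v)%:R) / 2%:R.

(* A sub-arc whose interior passes, in order, through the passages
   b, b+1, ..., b+k-1 (mod size w), with k >= 1. *)
Definition bridge_pos (w : gauss_code) (b j : nat) : nat := (b + j) %% size w.

Definition is_over_bridge (w : gauss_code) (b k : nat) : bool :=
  [&& 0 < k, b < size w &
      all (fun j => gover (nth gdef w (bridge_pos w b j))) (iota 0 k)].

Definition is_under_bridge (w : gauss_code) (b k : nat) : bool :=
  [&& 0 < k, b < size w &
      all (fun j => ~~ gover (nth gdef w (bridge_pos w b j))) (iota 0 k)].

Definition bridge_labels (w : gauss_code) (b k : nat) : seq nat :=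
  [seq glabel (nth gdef w (bridge_pos w b j)) | j <- iota 0 k].

(* D°_B: the knotoid diagram running from the end of B around to the start
   of B; the crossings met by B disappear. *)
Definition remove_bridge (w : gauss_code) (b k : nat) : gauss_code :=
  [seq x <- [seq nth gdef w (bridge_pos w (b + k) j) | j <- iota 0 (size w - k)]
     | glabel x \notin bridge_labels w b k].

(* Main.v *)
Require Import Defs.
From mathcomp Require Import all_boot all_order all_algebra all_fingroup.
From mathcomp Require Import zify ring lra.
Set Implicit Arguments. Unset Strict Implicit. Unset Printing Implicit Defensive.

Lemma fconnect_map (T T' : finType) (f : T -> T) (g : T' -> T') (h : T' -> T) :
  (forall x, fconnect f (h x) (h (g x))) ->
  forall x y, fconnect g x y -> fconnect f (h x) (h y).
Proof.
move=> hs x y /connectP [p pth ->]; elim: p x pth => [|z p IH] x /=.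
  by rewrite connect0.
case/andP=> /eqP gx pth; apply: connect_trans (IH _ pth); rewrite -gx; exact: hs.
Qed.

Lemma fcard_sim (T T' : finType) (f : T -> T) (g : T' -> T') (h : T' -> T) :
  injective f -> injective g ->
  (forall x, fconnect f (h x) (h (g x))) ->
  (forall y, exists x, fconnect f y (h x)) ->
  fcard f T <= fcard g T'.
Proof.
move=> injf injg hs hsurj.
have symf := fconnect_sym injf; have symg := fconnect_sym injg.
pose F x := froot f (h x).
apply: (@leq_trans #|F @: [set x | froots g x]|); last first.
  apply: leq_trans (leq_imset_card _ _) _.
  by apply/subset_leq_card/subsetP=> x; rewrite !inE => ->.
apply/subset_leq_card/subsetP=> r; rewrite !inE => /andP[/eqP rr _].
have [x cx] := hsurj r.
apply/imsetP; exists (froot g x); first by rewrite inE roots_root.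
have c1 : fconnect g (froot g x) x by rewrite symg connect_root.
have c2 := fconnect_map hs c1.
rewrite /F; apply/esym.
have -> : froot f (h (froot g x)) = froot f (h x) by move/(fingraph.rootP symf): c2.
rewrite -rr; move: cx; move/(fingraph.rootP symf); done.
Qed.

Lemma fconnect_porbit (T : finType) (s : {perm T}) x y :
  fconnect s x y = (y \in porbit s x).
Proof.
apply/idP/porbitP=> [c|[i ->]]; last by rewrite permX fconnect_iter.
by exists (findex s x y); rewrite permX iter_findex.
Qed.

Lemma fcard_perm (T : finType) (s : {perm T}) : fcard s T = #|porbits s|.
Proof.
have injs : injective s by exact: perm_inj.
have symf := fconnect_sym injs.
have eqo : forall x y, fconnect s x y -> porbit s x = porbit s y.
  move=> x y c; apply/eqP; rewrite eq_porbit_mem -fconnect_porbit symf //.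
pose R := [set x | froots s x].
have -> : porbits s = porbit s @: R.
  apply/setP=> O; apply/imsetP/imsetP=> [[x _ ->]|[x _ ->]]; last by exists x.
  by exists (froot s x); rewrite ?inE ?roots_root // (eqo _ _ (connect_root _ x)).
rewrite card_in_imset; last first.
  move=> x y; rewrite !inE => /eqP rx /eqP ry /eqP.
  rewrite eq_porbit_mem -fconnect_porbit => /(fingraph.rootP symf).
  by rewrite rx ry => ->.
by rewrite /n_comp_mem; apply: eq_card=> x; rewrite !inE andbT.
Qed.

Lemma fcard_tperm (T : finType) (f : T -> T) (injf : injective f) x y :
  fcard f T <= fcard (fun z => f (tperm x y z)) T + 1.
Proof.
pose s := perm injf.
rewrite (eq_fcard (f:=f) (f':=s)); last by move=> z; rewrite /s permE.
rewrite (eq_fcard (f:=fun z => f (tperm x y z)) (f':=(tperm x y * s)%g)); last first.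
  by move=> z; rewrite permM /s permE.
rewrite !fcard_perm.
have [<-|nxy] := eqVneq x y; first by rewrite tperm1 mul1g leq_addr.
have := porbits_mul_tperm s x y; rewrite /= nxy; case: (x \notin _) => /= H; lia.
Qed.

Lemma count_pos_nth (T : Type) (P : pred T) (s : seq T) x0 j :
  j < size s -> P (nth x0 s j) -> 0 < count P s.
Proof. by move=> hj Pj; rewrite -has_count; apply/(has_nthP x0); exists j. Qed.

Lemma count1_uniq (T : Type) (P : pred T) (s : seq T) x0 i j :
  count P s = 1 -> i < size s -> j < size s ->
  P (nth x0 s i) -> P (nth x0 s j) -> i = j.
Proof.
elim: s i j => [|y s IH] i j //= c.
case: i j => [|i] [|j] //= hi hj Pi Pj.
- by move: c; rewrite Pi /=; have := count_pos_nth hj Pj; lia.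
- by move: c; rewrite Pj /=; have := count_pos_nth hi Pi; lia.
- congr S; apply: (IH i j) => //; move: c; case: (P y) => /= c; last by [].
  by have := count_pos_nth hi Pi; lia.
Qed.

Notation lab v i := (glabel (nth gdef v i)).
Notation ovr v i := (gover (nth gdef v i)).

Lemma wf_uniq v k1 k2 : wf_gauss v -> k1 < size v -> k2 < size v ->
  lab v k1 = lab v k2 -> ovr v k1 = ovr v k2 -> k1 = k2.
Proof.
move=> wf h1 h2 el eo.
have := allP wf _ (mem_nth gdef h1) => /and3P[/eqP c1 /eqP c2 _].
case E: (ovr v k1).
  by apply: (count1_uniq (x0:=gdef) c1) => //=; rewrite ?eqxx ?E //= -?el ?eqxx -?eo ?E.
by apply: (count1_uniq (x0:=gdef) c2) => //=; rewrite ?eqxx ?E //= -?el ?eqxx -?eo ?E.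
Qed.

Lemma wf_ex v i : wf_gauss v -> i < size v ->
  exists2 j, j < size v & (j != i) && (lab v j == lab v i).
Proof.
move=> wf hi.
have := allP wf _ (mem_nth gdef hi) => /and3P[/eqP c1 /eqP c2 _].
case E: (ovr v i).
  have : has (fun y => (glabel y == lab v i) && ~~ gover y) v
    by rewrite has_count c2.
  case/(has_nthP gdef)=> j hj /andP[/eqP lj oj]; exists j => //.
  rewrite lj eqxx andbT; apply/eqP=> eji; move: oj; by rewrite eji E.
have : has (fun y => (glabel y == lab v i) && gover y) v
  by rewrite has_count c1.
case/(has_nthP gdef)=> j hj /andP[/eqP lj oj]; exists j => //.
rewrite lj eqxx andbT; apply/eqP=> eji; move: oj; by rewrite eji E.
Qed.

Lemma partner_char v i j : wf_gauss v -> i < size v -> j < size v ->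
  j != i -> lab v j = lab v i -> gpartner v i = j.
Proof.
move=> wf hi hj nji lji; rewrite /gpartner.
set P := (fun j0 => _).
have hP : has P (iota 0 (size v)).
  apply/(has_nthP 0); exists j; rewrite ?size_iota // nth_iota // /P add0n nji lji eqxx.
  done.
have fl : find P (iota 0 (size v)) < size v by rewrite -{2}(size_iota 0 (size v)) -has_find.
have := nth_find 0 hP; rewrite nth_iota // add0n /P => /andP[nfi /eqP lfi].
set f := find _ _ in fl nfi lfi *.
have [eo|no] := eqVneq (ovr v f) (ovr v j).
  by apply: (wf_uniq wf) => //; rewrite lfi lji.
exfalso; have [ei|ni] := eqVneq (ovr v i) (ovr v f).
  by move/negP: nfi; apply; apply/eqP; apply: (wf_uniq wf) => //; rewrite ei.
move/negP: nji; apply; apply/eqP; apply: (wf_uniq wf) => //.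
by move: no ni; case: (ovr v f); case: (ovr v j); case: (ovr v i).
Qed.

Lemma partner_spec v i : wf_gauss v -> i < size v ->
  [/\ gpartner v i < size v, gpartner v i != i &
      lab v (gpartner v i) = lab v i].
Proof.
move=> wf hi; have [j hj /andP[nji /eqP lji]] := wf_ex wf hi.
by rewrite (partner_char wf hi hj nji lji).
Qed.

Lemma partner_invol v i : wf_gauss v -> i < size v ->
  gpartner v (gpartner v i) = i.
Proof.
move=> wf hi; have [h1 h2 h3] := partner_spec wf hi.
by apply: partner_char => //; rewrite eq_sym.
Qed.

Definition fo m (F : nat -> nat) : 'I_m -> 'I_m := fun i => insubd i (F i).
Arguments fo : clear implicits.

Lemma ncyclesE m F : ncycles m F = fcard (fo m F) 'I_m.
Proof. by []. Qed.

Section FO.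
Variables (m : nat) (F : nat -> nat).
Hypothesis hF : forall i, i < m -> F i < m.

Lemma fo_val (i : 'I_m) : val (fo m F i) = F i.
Proof. by rewrite /fo val_insubd hF. Qed.

Lemma fo_iter k (i : 'I_m) : val (iter k (fo m F) i) = iter k F i.
Proof. by elim: k => //= k IH; rewrite fo_val IH. Qed.

Lemma fo_conn (a b : 'I_m) k : iter k F a = b -> fconnect (fo m F) a b.
Proof.
move=> e; have -> : b = iter k (fo m F) a by apply: val_inj; rewrite fo_iter.
exact: fconnect_iter.
Qed.

Lemma fo_inj : (forall i j, i < m -> j < m -> F i = F j -> i = j) ->
  injective (fo m F).
Proof.
move=> hi i j /(congr1 val); rewrite !fo_val => /(hi _ _ (ltn_ord i) (ltn_ord j)).
exact: val_inj.
Qed.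
End FO.

Definition Tf (v : gauss_code) j := if j < size v then (gpartner v j).+1 else 0.
Definition cT (v : gauss_code) := ncycles (size v).+1 (Tf v).

Lemma Tf_range v i : wf_gauss v -> i < (size v).+1 -> Tf v i < (size v).+1.
Proof.
move=> wf hi; rewrite /Tf; case: ifP => // h.
by have [h1 _ _] := partner_spec wf h; rewrite ltnS.
Qed.

Lemma Tf_inj v i j : wf_gauss v -> i < (size v).+1 -> j < (size v).+1 ->
  Tf v i = Tf v j -> i = j.
Proof.
move=> wf hi hj; rewrite /Tf; case: ifP => ii; case: ifP => jj //.
- by case=> e; rewrite -(partner_invol wf ii) e partner_invol.
- move=> _; move: ii jj hi hj; rewrite !ltnS => /negbT ii /negbT jj hi hj.
  move: ii jj; rewrite -!leqNgt => a b; apply/eqP; rewrite eqn_leq; lia.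
Qed.

Definition del (i : nat) (s : gauss_code) : gauss_code := take i s ++ drop i.+1 s.

Lemma size_del i s : i < size s -> size (del i s) = (size s).-1.
Proof. by move=> h; rewrite /del size_cat size_take h size_drop; lia. Qed.

Lemma nth_del i s j : i < size s -> nth gdef (del i s) j = nth gdef s (bump i j).
Proof.
move=> h; rewrite /del nth_cat size_take h /bump.
case: ltnP => hj; first by rewrite nth_take.
by rewrite nth_drop; congr nth; lia.
Qed.

Lemma filter_del (a : pred gentry) i s : i < size s -> ~~ a (nth gdef s i) ->
  filter a (del i s) = filter a s.
Proof.
move=> h na; rewrite -{2}(cat_take_drop i s) (drop_nth gdef h) /del !filter_cat /=.
by rewrite (negbTE na).
Qed.

Lemma only_pq v p k : wf_gauss v -> p < size v -> k < size v ->
  lab v k = lab v p -> k = p \/ k = gpartner v p.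
Proof.
move=> wf hp hk e; have [->|nkp] := eqVneq k p; first by left.
by right; rewrite (partner_char wf hp hk nkp e).
Qed.

Lemma wf_filterP v (P : pred nat) : wf_gauss v -> wf_gauss [seq x <- v | P (glabel x)].
Proof.
move=> wf; apply/allP => x; rewrite mem_filter => /andP[ax xv].
have := allP wf x xv => /and3P[c1 c2 c3].
rewrite !count_filter.
have E1 : count (predI (fun y => (glabel y == glabel x) && gover y) (fun y => P (glabel y))) v
   = count (fun y => (glabel y == glabel x) && gover y) v.
  apply: eq_count => y /=; case E: (glabel y == glabel x); rewrite ?andbF //=.
  by rewrite (eqP E) ax andbT.
have E2 : count (predI (fun y => (glabel y == glabel x) && ~~ gover y) (fun y => P (glabel y))) v
   = count (fun y => (glabel y == glabel x) && ~~ gover y) v.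
  apply: eq_count => y /=; case E: (glabel y == glabel x); rewrite ?andbF //=.
  by rewrite (eqP E) ax andbT.
rewrite E1 E2.
rewrite c1 c2 /=; apply/allP => y; rewrite mem_filter => /andP[_ yv].
exact: (allP c3 y yv).
Qed.

Lemma wf_filter v l : wf_gauss v -> wf_gauss [seq x <- v | glabel x != l].
Proof. exact: (wf_filterP (fun n => n != l)). Qed.

Section Step.
Variables (v : gauss_code) (p q : nat).
Hypotheses (wf : wf_gauss v) (pq : p < q) (qm : q < size v) (hq : gpartner v p = q).
Let m := size v.
Let l := lab v p.
Let a := fun x : gentry => glabel x != l.
Let v2 := filter a v.
Let e j := bump q (bump p j).

Lemma pm : p < m. Proof. rewrite /m; lia. Qed.

Lemma lq : lab v q = l.
Proof. by rewrite /l; have [_ _ E] := partner_spec wf pm; rewrite -hq E. Qed.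

Lemma e_ne j : e j != p /\ e j != q.
Proof. rewrite /e /bump; split; apply/eqP; case: leqP; case: leqP; lia. Qed.

Lemma v2E : v2 = del p (del q v).
Proof.
have sq : size (del q v) = m.-1 by rewrite size_del.
have hp' : p < size (del q v) by rewrite sq; rewrite /m; lia.
rewrite /v2 -(filter_del (i:=q)) //; last by rewrite /a lq eqxx.
rewrite -(filter_del (i:=p)) //; last first.
  by rewrite nth_del // /bump leqNgt pq /= /a eqxx.
apply/all_filterP/(all_nthP gdef) => j hj.
rewrite /a nth_del // nth_del //; apply/eqP => el.
have hj' : e j < m.
  move: hj; rewrite size_del // sq /e /bump /m; case: leqP; case: leqP; lia.
have [+ +] := e_ne j; rewrite /e => n1 n2.
case: (only_pq wf pm hj' el) => /eqP; rewrite /e ?hq; by [rewrite (negbTE n1)|rewrite (negbTE n2)].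
Qed.

Lemma size_v2 : size v2 = m - 2.
Proof.
by rewrite v2E size_del ?size_del //; rewrite /m; lia.
Qed.

Lemma nth_v2 j : nth gdef v2 j = nth gdef v (e j).
Proof.
rewrite v2E nth_del ?nth_del //; rewrite size_del //; move: qm; rewrite /m; lia.
Qed.

Definition tp j := if j == p then q else if j == q then p else j.
Definition Fr j := Tf v (tp j).
Definition nx z := if z == p then (if p.+1 == q then q.+1 else p.+1)
                   else if z == q then q.+1 else z.
Definition cc z := z - (p < z) - (q < z).

Lemma wf2 : wf_gauss v2.
Proof. exact: wf_filter. Qed.

Lemma qp : gpartner v q = p.
Proof. by rewrite -hq partner_invol // pm. Qed.

Lemma Fr_p : Fr p = p.+1.
Proof. by rewrite /Fr /tp eqxx /Tf qm qp. Qed.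

Lemma Fr_q : Fr q = q.+1.
Proof.
have npq : (q == p) = false by apply/eqP; lia.
by rewrite /Fr /tp npq eqxx /Tf pm hq.
Qed.

Lemma Fr_other j : j != p -> j != q -> Fr j = Tf v j.
Proof. by move=> /negbTE h1 /negbTE h2; rewrite /Fr /tp h1 h2. Qed.

Lemma tp_range j : j < m.+1 -> tp j < m.+1.
Proof. move=> h; move: qm pq; rewrite /tp /m; repeat case: ifP => ?; lia. Qed.

Lemma Fr_range j : j < m.+1 -> Fr j < m.+1.
Proof. by move=> h; apply: Tf_range => //; apply: tp_range. Qed.

Lemma Fr_inj i j : i < m.+1 -> j < m.+1 -> Fr i = Fr j -> i = j.
Proof.
move=> hi hj /(Tf_inj wf (tp_range hi) (tp_range hj)).
move: pq hi hj; rewrite /tp /m; repeat case: ifP => ?; lia.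
Qed.

Lemma iter_nx z : exists k, iter k Fr z = nx z.
Proof.
rewrite /nx; case: eqP => [->|zp].
  case: eqP => [e1|ne].
    by exists 2; rewrite /= Fr_p e1 Fr_q.
  by exists 1; rewrite /= Fr_p.
case: eqP => [->|zq]; first by exists 1; rewrite /= Fr_q.
by exists 0.
Qed.

Lemma nx_e y : y.+1 < m.-1 -> nx (e y).+1 = e y.+1.
Proof. rewrite /nx /e /bump /m; move: pq qm; repeat case: ifP => ?; lia. Qed.

Lemma nx_e0 : nx 0 = e 0.
Proof. rewrite /nx /e /bump /m; move: pq qm; repeat case: ifP => ?; lia. Qed.

Lemma nx_ok z : z < m.+1 -> [/\ nx z < m.+1, nx z != p & nx z != q].
Proof. rewrite /nx /m; move: pq qm => ? ? ?; split; try apply/eqP; repeat case: ifP => ?; lia. Qed.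

Lemma e_cc z : z != p -> z != q -> e (cc z) = z.
Proof. rewrite /e /cc /bump; move: pq=> h /eqP h1 /eqP h2; lia. Qed.

Lemma cc_range z : z < m.+1 -> z != p -> z != q -> cc z < m.-1.
Proof. rewrite /cc /m; move: pq qm => h h' h1 /eqP h2 /eqP h3; lia. Qed.

Lemma e_range j : j < m.-1 -> e j < m.+1.
Proof. rewrite /e /bump /m; move: pq qm; lia. Qed.

Lemma transport x : x < size v2 -> gpartner v (e x) = e (gpartner v2 x).
Proof.
move=> hx; have [h1 h2 h3] := partner_spec wf2 hx.
have sz := size_v2.
have hex : e x < m by move: hx; rewrite sz /e /bump /m; move: qm pq; lia.
have hey : e (gpartner v2 x) < m.
  by move: h1; rewrite sz /e /bump /m; move: qm pq; lia.
apply: partner_char => //.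
  apply/eqP => ee; move/eqP: h2; apply.
  by move: ee; rewrite /e /bump; lia.
by rewrite -!nth_v2 h3.
Qed.

Lemma cT_step : cT v <= cT v2 + 1.
Proof.
rewrite /cT !ncyclesE.
have hT : forall i, i < m.+1 -> Tf v i < m.+1 := fun i => Tf_range wf.
have injT : injective (fo m.+1 (Tf v)) := fo_inj hT (fun i j hi hj => Tf_inj wf hi hj).
pose P : 'I_m.+1 := Ordinal (leqW pm).
pose Q : 'I_m.+1 := Ordinal (leqW qm).
apply: leq_trans (fcard_tperm injT P Q) _; rewrite leq_add2r.
rewrite (eq_fcard (f:= fun z => fo m.+1 (Tf v) (tperm P Q z)) (f' := fo m.+1 Fr)); last first.
  move=> z; apply: val_inj; rewrite fo_val // fo_val; last exact: Fr_range.
  rewrite /Fr; congr Tf; case: tpermP => [->|->|].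
  - by rewrite /tp /= eqxx.
  - by rewrite /tp /=; move: pq; repeat case: ifP => ?; lia.
  - move=> nP nQ; rewrite /tp; case: eqP => [e1|_]; first by case: nP; apply: val_inj.
    by case: eqP => [e1|_] //; case: nQ; apply: val_inj.
have sz := size_v2.
have m2 : 2 <= m by move: pq qm; rewrite /m; lia.
pose h := fun x : 'I_(size v2).+1 => insubd (ord0 : 'I_m.+1) (e x).
have vh : forall x, val (h x) = e x.
  move=> x; rewrite /h val_insubd e_range //; have := ltn_ord x; move: sz m2; rewrite /m; lia.
have hT2 : forall i, i < (size v2).+1 -> Tf v2 i < (size v2).+1 := fun i => Tf_range wf2.
apply: (fcard_sim (h := h)).
- exact: (fo_inj Fr_range Fr_inj).
- exact: (fo_inj hT2 (fun i j hi hj => Tf_inj wf2 hi hj)).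
- move=> x; apply: connect_trans (fconnect1 _ _) _.
  case: (ltnP x (size v2)) => hx.
    have [k ek] := iter_nx (e (gpartner v2 x)).+1.
    have [ne1 ne2] := e_ne x.
    have ex : e x < m by move: hx sz; rewrite /e /bump /m; move: qm pq; lia.
    apply: (fo_conn Fr_range (k := k)); rewrite fo_val; last exact: Fr_range.
    rewrite vh vh fo_val // Fr_other // /Tf ex transport //.
    have [h1 _ _] := partner_spec wf2 hx.
    rewrite /Tf hx ek; apply: nx_e; move: h1 sz; lia.
  have xe : nat_of_ord x = size v2 by have := ltn_ord x; move: hx; lia.
  have ex : e x = m by rewrite xe; move: sz; rewrite /e /bump /m; move: qm pq; lia.
  have [k0 ek0] := iter_nx 0.
  apply: (fo_conn Fr_range (k := k0)); rewrite fo_val; last exact: Fr_range.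
  rewrite vh vh fo_val // ex Fr_other; first last.
    by apply/eqP; move: qm; rewrite /m; lia.
    by apply/eqP; move: qm pq; rewrite /m; lia.
  by rewrite /Tf ltnn xe ltnn ek0 nx_e0.
- move=> y; have [k ek] := iter_nx y.
  have [n1 n2 n3] := nx_ok (ltn_ord y).
  have cr : cc (nx y) < (size v2).+1.
    by have := cc_range n1 n2 n3; move: sz; lia.
  exists (insubd ord0 (cc (nx y))).
  apply: (fo_conn Fr_range (k := k)); rewrite vh val_insubd cr e_cc //.
Qed.
End Step.

Lemma ncross_filter v l : l \in map glabel v ->
  ncross [seq x <- v | glabel x != l] = (ncross v).-1.
Proof.
move=> lv; rewrite /ncross.
have -> : map glabel [seq x <- v | glabel x != l] = [seq y <- map glabel v | y != l].
  by rewrite filter_map.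
by rewrite -filter_undup -(rem_filter l (undup_uniq _)) size_rem // mem_undup.
Qed.

Lemma ncross_pos v l : l \in map glabel v -> 0 < ncross v.
Proof. by move=> lv; rewrite /ncross lt0n size_eq0; apply/eqP => e; move: lv; rewrite -mem_undup e. Qed.

Lemma step v l : wf_gauss v ->
  ncross [seq x <- v | glabel x != l] + cT v <= ncross v + cT [seq x <- v | glabel x != l].
Proof.
move=> wf; case lv: (l \in map glabel v); last first.
  have -> : [seq x <- v | glabel x != l] = v.
    apply/all_filterP/allP => x xv; apply/eqP => e; move: lv; rewrite -e map_f //.
  by [].
have np := ncross_pos lv; rewrite ncross_filter //.
case/mapP: lv => x xv ->.
set p0 := index x v.
have hp0 : p0 < size v by rewrite index_mem.
have lp0 : glabel x = lab v p0 by rewrite nth_index.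
have [h1 h2 h3] := partner_spec wf hp0.
rewrite lp0; case: (ltngtP p0 (gpartner v p0)) => c.
- have := cT_step wf c h1 (erefl _); lia.
- have := @cT_step v (gpartner v p0) p0 wf c hp0 (partner_invol wf hp0).
  rewrite h3; lia.
- by move: h2; rewrite -c eqxx.
Qed.

Lemma chain (L : seq nat) u : wf_gauss u ->
  ncross [seq x <- u | glabel x \notin L] + cT u <= ncross u + cT [seq x <- u | glabel x \notin L].
Proof.
move=> wf; elim: L => [|l L IH].
  have -> : [seq x <- u | glabel x \notin [::]] = u by apply/all_filterP/allP.
  by [].
have -> : [seq x <- u | glabel x \notin l :: L] =
  [seq x <- [seq x <- u | glabel x \notin L] | glabel x != l].
  by rewrite -filter_predI; apply: eq_filter => x /=; rewrite in_cons negb_or.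
have := step l (wf_filterP (fun n => n \notin L) wf); lia.
Qed.

Lemma modn2 a m : a < m.*2 -> a %% m = if a < m then a else a - m.
Proof.
move=> ha; case: (ltnP a m) => h; first by rewrite modn_small.
by rewrite -{1}(subnK h) modnDr modn_small //; lia.
Qed.

Lemma modn2c a m : a < m.*2 -> (a < m /\ a %% m = a) \/ (m <= a /\ a %% m = a - m).
Proof. by move/modn2 => ->; case: ltnP => h; [left|right]. Qed.

Ltac mod_elim := repeat match goal with
 | |- context [?a %% ?m] =>
   lazymatch a with context [_ %% _] => fail | _ =>
     let H := fresh "H" in let E := fresh "E" in
     have [[H E]|[H E]] := @modn2c a m ltac:(lia); rewrite E; clear E end
 end.

Lemma nth_rot0 (s : gauss_code) r j : r < size s -> j < size s ->
  nth gdef (rot r s) j = nth gdef s ((j + r) %% size s).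
Proof.
move=> hr hj; rewrite /rot nth_cat size_drop; case: ltnP => c.
  by rewrite nth_drop modn_small; [congr nth; lia | lia].
rewrite nth_take; last by lia.
by rewrite modn2; [congr nth; case: ltnP; lia | lia].
Qed.

Section Cut.
Variables (w : gauss_code) (r : nat).
Hypotheses (wf : wf_gauss w) (rm : r < size w).
Let m := size w.
Let u := rot r w.
Let pi j := (j + r) %% m.

Lemma pe : perm_eq u w.
Proof. by rewrite /u perm_rot. Qed.

Lemma wfu : wf_gauss u.
Proof.
rewrite /wf_gauss (perm_all _ pe); apply: sub_all wf => x /=.
by rewrite !(seq.permP pe) (perm_all _ pe).
Qed.

Lemma ncross_u : ncross u = ncross w.
Proof.
rewrite /ncross; apply: perm_size; apply: perm_undup; apply: perm_mem.
exact: perm_map pe.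
Qed.

Lemma size_u : size u = m.
Proof. by rewrite /u size_rot. Qed.

Lemma nth_u j : j < m -> nth gdef u j = nth gdef w (pi j).
Proof. by move=> hj; rewrite /u nth_rot0. Qed.

Lemma pi_range j : pi j < m.
Proof. by rewrite /pi ltn_pmod //; rewrite /m; lia. Qed.

Lemma transportU x : x < m -> gpartner w (pi x) = pi (gpartner u x).
Proof.
move=> hx; have hx' : x < size u by rewrite size_u.
have [h1 h2 h3] := partner_spec wfu hx'.
rewrite size_u in h1.
apply: partner_char => //; try exact: pi_range.
  apply/eqP => e; move/eqP: h2; apply; move: e; rewrite /pi !modn2; last 2 first.
  - by move: rm hx; rewrite /m; lia.
  - by move: rm h1; rewrite /m; lia.
  by repeat case: ifP => ?; lia.
by rewrite -!nth_u.
Qed.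

Definition Sk i := gpartner w (i.+1 %% m).

Lemma cut : ncycles m Sk <= cT u.
Proof.
have m0 : 0 < m by move: rm; rewrite /m; lia.
have rm' : r < m := rm.
rewrite /cT ncyclesE ncyclesE size_u.
have hS : forall i, i < m -> Sk i < m.
  by move=> i hi; have [] := partner_spec wf (i:= i.+1 %% m) (ltn_pmod _ m0).
have hT : forall i, i < m.+1 -> Tf u i < m.+1.
  by move=> i hi; have := @Tf_range u i wfu; rewrite size_u; apply.
pose r' := (r + m - 1) %% m.
have r'm : r' < m by rewrite ltn_pmod.
pose hh := fun x : 'I_m.+1 => insubd (Ordinal m0) ((x + r') %% m).
have vh : forall x, val (hh x) = (x + r') %% m by move=> x; rewrite /hh val_insubd ltn_pmod.
apply: (fcard_sim (h := hh)).
- apply: fo_inj => // i j hi hj; rewrite /Sk => e.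
  have := partner_invol wf (i:=i.+1 %% m) (ltn_pmod _ m0).
  rewrite e partner_invol ?ltn_pmod //.
  by mod_elim; lia.
- apply: fo_inj => // i j hi hj; apply: Tf_inj wfu _ _; rewrite size_u //.
- move=> x; case: (ltnP x m) => hx.
    apply: (fo_conn hS (k := 1)) => /=; rewrite !vh fo_val; last exact: hT.
    rewrite /Tf size_u hx /Sk.
    have hx' : x < size u by rewrite size_u.
    have [h1 _ _] := partner_spec wfu hx'.
    rewrite size_u in h1.
    have E : ((x + r') %% m).+1 %% m = pi x.
      rewrite /pi /r'; mod_elim; lia.
    rewrite E transportU //.
    by rewrite /pi /r'; mod_elim; lia.
  have xe : nat_of_ord x = m by have := ltn_ord x; move: hx; lia.
  apply: (fo_conn hS (k := 0)) => /=; rewrite !vh fo_val; last exact: hT.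
  rewrite /Tf size_u xe ltnn /= add0n.
  by rewrite /r'; mod_elim; lia.
- move=> y; exists (insubd ord0 ((y + (m - r')) %% m)).
  apply: (fo_conn hS (k := 0)) => /=; rewrite vh val_insubd.
  have hlt : (y + (m - r')) %% m < m.+1 by apply: leq_trans (ltn_pmod _ m0) _.
  rewrite hlt.
  have hy := ltn_ord y; rewrite /r'; by mod_elim; lia.
Qed.
End Cut.

Lemma bridge_le w b k : wf_gauss w ->
  is_over_bridge w b k || is_under_bridge w b k -> k <= size w.
Proof.
move=> wf hb; rewrite leqNgt; apply/negP => mk.
set m := size w.
have bm : b < m by case/orP: hb => /and3P[].
have m0 : 0 < m by lia.
have [h1 h2 h3] := partner_spec wf bm.
set p' := gpartner w b in h1 h2 h3.
have ne : ovr w p' != ovr w b.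
  by apply/eqP => e; move/eqP: h2; apply; apply: (wf_uniq wf).
pose j := (p' + m - b) %% m.
have jk : j < k by apply: leq_trans (ltn_pmod _ m0) (ltnW mk).
have bj : bridge_pos w b j = p'.
  by rewrite /bridge_pos /j; mod_elim; lia.
have b0 : bridge_pos w b 0 = b by rewrite /bridge_pos addn0 modn_small.
have j0 : 0 < k by case/orP: hb => /and3P[].
case/orP: hb => /and3P[_ _ /allP al].
- move: (al j) (al 0); rewrite !mem_iota /= bj b0 jk j0 => /(_ isT) a1 /(_ isT) a2.
  by move: ne; rewrite a1 a2.
- move: (al j) (al 0); rewrite !mem_iota /= bj b0 jk j0 => /(_ isT) a1 /(_ isT) a2.
  by move: ne a1 a2; case: (ovr w p'); case: (ovr w b).
Qed.

Lemma remove_bridgeE w b k : b < size w -> k <= size w ->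
  remove_bridge w b k =
  [seq x <- rot ((b + k) %% size w) w | glabel x \notin bridge_labels w b k].
Proof.
move=> bm km; set m := size w.
have m0 : 0 < m by lia.
have -> : rot ((b + k) %% m) w = [seq nth gdef w (bridge_pos w (b + k) j) | j <- iota 0 m].
  apply: (@eq_from_nth _ gdef); first by rewrite size_rot size_map size_iota.
  move=> j; rewrite size_rot => hj.
  rewrite (nth_map 0) ?size_iota // nth_iota // add0n nth_rot0 ?ltn_pmod //.
  by rewrite /bridge_pos modnDmr addnC.
have -> : iota 0 m = iota 0 (m - k) ++ iota (m - k) k by rewrite -iotaD subnK.
rewrite /remove_bridge map_cat filter_cat.
have -> : [seq x <- [seq nth gdef w (bridge_pos w (b + k) j) | j <- iota (m - k) k] | glabel x \notin bridge_labels w b k] = [::].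
  apply/eqP; rewrite -size_eq0 size_filter eqn0Ngt -has_count; apply/negP => /hasP [x].
  case/mapP => j; rewrite mem_iota => /andP[j1 j2] -> /=.
  rewrite /bridge_labels => /negP; apply; apply/mapP; exists (j - (m - k)).
    by rewrite mem_iota; lia.
  rewrite /bridge_pos; congr glabel; congr nth.
  have -> : b + k + j = b + (j - (m - k)) + m by lia.
  by rewrite modnDr.
by rewrite cats0.
Qed.

Lemma cT_pos v : wf_gauss v -> 0 < cT v.
Proof.
move=> wf.
have hT : forall i, i < (size v).+1 -> Tf v i < (size v).+1 := fun i => Tf_range wf.
have inj := fo_inj hT (fun i j hi hj => Tf_inj wf hi hj).
rewrite /cT ncyclesE /n_comp_mem; apply/card_gt0P.
exists (froot (fo (size v).+1 (Tf v)) ord0); rewrite inE /=; apply/andP; split => //.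
apply/eqP; apply: fingraph.root_root; exact: fconnect_sym.
Qed.

Lemma main_nat w b k : wf_gauss w ->
  is_over_bridge w b k || is_under_bridge w b k ->
  ncross (remove_bridge w b k) + seifert_circles_knot w <=
  ncross w + cT (remove_bridge w b k).
Proof.
move=> wf hb.
have km := bridge_le wf hb.
have bm : b < size w by case/orP: hb => /and3P[].
rewrite (remove_bridgeE bm km).
set r := (b + k) %% size w.
have rm : r < size w by rewrite ltn_pmod //; lia.
have ch := chain (bridge_labels w b k) (wfu r wf).
have cu := cut wf rm.
have sk : seifert_circles_knot w = ncycles (size w) (Sk w).
  by rewrite /seifert_circles_knot; case: eqP => // e; move: bm; rewrite e.
rewrite sk; move: ch; rewrite ncross_u; lia.
Qed.

Import Order.TTheory GRing.Theory Num.Theory.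
Local Open Scope ring_scope.

Theorem mainTheorem4 (w : gauss_code) (b k : nat) :
  knot_diagram w ->
  is_over_bridge w b k || is_under_bridge w b k ->
  knotoid_genus (remove_bridge w b k) <= knot_genus w.
Proof.
move=> /andP[wf _] hb.
have H := main_nat wf hb.
have cp : (0 < cT (remove_bridge w b k))%N.
  apply: cT_pos; have bm : (b < size w)%N by case/orP: hb => /and3P[].
  rewrite (remove_bridgeE bm (bridge_le wf hb)).
  exact: (wf_filterP (fun n => n \notin bridge_labels w b k) (wfu _ wf)).
rewrite /knotoid_genus /knot_genus.
have -> : seifert_circles_knotoid (remove_bridge w b k) = (cT (remove_bridge w b k) - 1)%N by [].
move: H cp.
set a := ncross _; set s := seifert_circles_knot w; set n := ncross w; set c := cT _.
move=> H cp.
rewrite natrB // ler_pM2r ?invr_gt0 ?ltr0n //.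
have : (a + s)%:R <= (n + c)%:R :> rat by rewrite ler_nat.
rewrite !natrD => H'; lra.
Qed.
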